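(* Let $(\Lambda,\Pi,\perp,\mathrm{push})$ be a realizability lattice. For all $P,R\in\mathcal P_\bullet(\Pi)$ and $L\subseteq\Lambda$: $L\leadsto_\bullet R\subseteq P$ if and only if $R\subseteq P\ast_\bullet L$.
   Context: A realizability lattice consists of sets $\Lambda$ (terms), $\Pi$ (stacks), a relation $\perp\subseteq\Lambda\times\Pi$ (write $t\perp\pi$) and a map $\mathrm{push}:\Lambda\times\Pi\to\Pi$, written $t\cdot\pi$. For $L\subseteq\Lambda$, $L^\perp=\{\pi:\forall t\in L,\ t\perp\pi\}$; for $P\subseteq\Pi$, ${}^\perp P=\{t:\forall \pi\in P,\ t\perp\pi\}$; $\overline P=({}^\perp P)^\perp$; $\widehat P=\bigcup_{\pi\in P}\overline{\{\pi\}}$; $\mathcal P_\bullet(\Pi)=\{P\subseteq\Pi:\widehat P=P\}$. For $L\subseteq\Lambda$, $P\subseteq\Pi$: $L\leadsto P=\{t\cdot\pi:t\in L,\pi\in P\}$, $L\leadsto_\bullet P=\widehat{L\leadsto P}$, and $P\ast_\bullet L=\{\pi\in\Pi: t\cdot\pi'\in P\text{ for all }t\in L,\ \pi'\in\overline{\{\pi\}}\}$. *)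

(* Defs.v *)
Record RealizabilityLattice := {
  Lam : Type;
  Pi : Type;
  perp : Lam -> Pi -> Prop;
  push : Lam -> Pi -> Pi
}.

Section Defs.
Variable A : RealizabilityLattice.
Local Notation Λ := (Lam A).
Local Notation Π := (Pi A).
Local Notation "t ⊥ π" := (perp A t π) (at level 70).
Local Notation "t · π" := (push A t π) (at level 40).

Definition subset {T : Type} (X Y : T -> Prop) : Prop := forall x, X x -> Y x.

Definition orthL (L : Λ -> Prop) : Π -> Prop := fun π => forall t, L t -> t ⊥ π.
Definition orthP (P : Π -> Prop) : Λ -> Prop := fun t => forall π, P π -> t ⊥ π.
Definition closure (P : Π -> Prop) : Π -> Prop := orthL (orthP P).
Definition single (π : Π) : Π -> Prop := fun π' => π' = π.
Definition hat (P : Π -> Prop) : Π -> Prop :=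
  fun ρ => exists π, P π /\ closure (single π) ρ.
Definition bullet_closed (P : Π -> Prop) : Prop := forall ρ, hat P ρ <-> P ρ.
Definition arrow (L : Λ -> Prop) (P : Π -> Prop) : Π -> Prop :=
  fun ρ => exists t π, L t /\ P π /\ ρ = t · π.
Definition arrow_b (L : Λ -> Prop) (P : Π -> Prop) : Π -> Prop := hat (arrow L P).
Definition star_b (P : Π -> Prop) (L : Λ -> Prop) : Π -> Prop :=
  fun π => forall t π', L t -> closure (single π) π' -> P (t · π').
End Defs.

(* Main.v *)
Require Import Defs.

Lemma self_closure (A : RealizabilityLattice) (p : Pi A) : closure A (single A p) p.
Proof. intros t Ht. apply Ht. reflexivity. Qed.

Theorem mainTheorem3 (A : RealizabilityLattice) (P R : Pi A -> Prop)
  (L : Lam A -> Prop) :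
  bullet_closed A P -> bullet_closed A R ->
  (subset (arrow_b A L R) P <-> subset R (star_b A P L)).
Proof.
  intros HP HR. split.
  - intros H p Rp t p' Lt Hc. apply H. exists (push A t p'). split.
    + exists t, p'. split; [exact Lt|]. split; [|reflexivity].
      apply HR. exists p. split; assumption.
    + apply self_closure.
  - intros H r [s [[t [p [Lt [Rp ->]]]] Hc]]. apply HP.
    exists (push A t p). split; [|exact Hc].
    apply (H p Rp t p Lt). apply self_closure.
Qed.
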